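(* Let $\beta$ be a totally positive quadratic integer satisfying \[ \operatorname{Tr}\beta \leq \operatorname{Nm}\beta < 2\operatorname{Tr}\beta - 4. \] Then for every integer $n \geq 0$, $p_\beta\big((\operatorname{Tr}\beta)\beta^n\big) = n+1$.
   Context: A quadratic integer is a root of a monic irreducible quadratic polynomial in $\mathbb{Z}[x]$; it is totally positive if both it and its conjugate $\beta'$ are positive real numbers. $\operatorname{Tr}\beta = \beta + \beta'$ and $\operatorname{Nm}\beta = \beta\beta'$. For $\alpha \in \mathbb{C}$, $p_\beta(\alpha) \in \mathbb{Z}_{\geq 0}\cup\{\infty\}$ is the number of polynomials $f \in \mathbb{Z}_{\geq 0}[x]$ (non-negative integer coefficients) with $f(\beta) = \alpha$. *)

(* Defs.v *)
From mathcomp Require Import all_boot all_order all_algebra.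
From mathcomp Require Import reals.
Set Implicit Arguments. Unset Strict Implicit. Unset Printing Implicit Defensive.
Import Order.TTheory GRing.Theory Num.Theory.
Local Open Scope ring_scope.

Definition polyZ (R : nzRingType) (p : {poly int}) : {poly R} :=
  map_poly (fun z : int => z%:~R) p.

(* beta (a real number) is a quadratic integer with minimal polynomial p :
   p is a monic irreducible quadratic polynomial in Z[x] with p(beta) = 0.
   (For monic p, irreducibility in Z[x] is the same as over Q.) *)
Definition quad_int_minpoly (R : realType) (p : {poly int}) (beta : R) : Prop :=
  [/\ p \is monic, size p = 3%N,
      irreducible_poly (polyZ rat p) & root (polyZ R p) beta].

(* The conjugate beta' of beta: the other root of p = x^2 + p_1 x + p_0,
   i.e. beta' = -p_1 - beta. *)
Definition qconj (R : realType) (p : {poly int}) (beta : R) : R :=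
  - (p`_1)%:~R - beta.

Definition qtr (R : realType) (p : {poly int}) (beta : R) : R :=
  beta + qconj p beta.
Definition qnm (R : realType) (p : {poly int}) (beta : R) : R :=
  beta * qconj p beta.

Definition totally_positive (R : realType) (p : {poly int}) (beta : R) : Prop :=
  0 < beta /\ 0 < qconj p beta.

Definition nonneg_repr (R : realType) (beta alpha : R) (f : {poly int}) : Prop :=
  (forall i, 0 <= f`_i) /\ (polyZ R f).[beta] = alpha.

(* p_beta(alpha) = k (finite): exactly k polynomials represent alpha. *)
Definition p_count_eq (R : realType) (beta alpha : R) (k : nat) : Prop :=
  exists s : seq {poly int},
    [/\ uniq s, size s = k & forall f, f \in s <-> nonneg_repr beta alpha f].

(* Main.v *)
Require Import Defs.
From mathcomp Require Import all_boot all_order all_algebra.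
From mathcomp Require Import reals.
From mathcomp Require Import ring lra zify.
Import Order.TTheory GRing.Theory Num.Theory.
Set Implicit Arguments. Unset Strict Implicit.
Local Open Scope ring_scope.

Notation ev f y := ((polyZ _ f).[y]).

Lemma evD (R : realType) (f g : {poly int}) (y : R) : ev (f + g) y = ev f y + ev g y.
Proof. by rewrite /polyZ rmorphD hornerD. Qed.
Lemma evB (R : realType) (f g : {poly int}) (y : R) : ev (f - g) y = ev f y - ev g y.
Proof. by rewrite /polyZ rmorphB hornerD hornerN. Qed.
Lemma evM (R : realType) (f g : {poly int}) (y : R) : ev (f * g) y = ev f y * ev g y.
Proof. by rewrite /polyZ rmorphM hornerM. Qed.
Lemma evCX (R : realType) (c : int) n (y : R) : ev (c%:P * 'X^n) y = c%:~R * y ^+ n.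
Proof. by rewrite /polyZ rmorphM /= map_polyC map_polyXn hornerCM hornerXn. Qed.
Lemma evX (R : realType) n (y : R) : ev ('X^n) y = y ^+ n.
Proof. by rewrite /polyZ map_polyXn hornerXn. Qed.

Lemma ev_sum (R : realType) (f : {poly int}) (y : R) N : (size f <= N)%N ->
  ev f y = \sum_(i < N) (f`_i)%:~R * y ^+ i.
Proof.
move=> hN; rewrite /polyZ (horner_coef_wide (n:=N)).
  by apply: eq_bigr => i _; rewrite coef_map.
by rewrite size_map_inj_poly //; apply: intr_inj.
Qed.

Lemma ev_take (R : realType) (f : {poly int}) (y : R) N k : (size f <= N + k)%N ->
  ev f y = ev (take_poly N f) y + \sum_(j < k) (f`_(N + j))%:~R * y ^+ (N + j).
Proof.
move=> hN; rewrite (ev_sum _ hN) big_split_ord /=.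
rewrite (ev_sum _ (size_take_poly N f)); congr (_ + _).
by apply: eq_bigr => i _; rewrite coef_take_poly ltn_ord.
Qed.

Lemma coef_le (R : realType) (f : {poly int}) (A : R) i : 0 <= A ->
  (forall j, 0 <= f`_j) -> (f`_i)%:~R * A ^+ i <= ev f A.
Proof.
move=> hA hf.
have hs : (size f <= maxn (size f) i.+1)%N by rewrite leq_maxl.
have hi : (i < maxn (size f) i.+1)%N by rewrite leq_max ltnSn orbT.
rewrite (ev_sum _ hs) (bigD1 (Ordinal hi)) //=.
rewrite lerDl; apply: sumr_ge0 => j _.
by apply: mulr_ge0; [rewrite ler0z | apply: exprn_ge0].
Qed.

Lemma diff_sum (R : realType) (f : {poly int}) (A B : R) N : (size f <= N)%N ->
  ev f B * A ^+ N - ev f A * B ^+ N =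
  \sum_(i < N) (f`_i)%:~R * (B ^+ i * A ^+ N - A ^+ i * B ^+ N).
Proof.
move=> hN; rewrite !(ev_sum _ hN) !mulr_suml -sumrB.
by apply: eq_bigr => i _; ring.
Qed.

Lemma term_pos (R : realType) (A B : R) i N : 0 < B -> B < A -> (i <= N)%N ->
  0 <= B ^+ i * A ^+ N - A ^+ i * B ^+ N /\
  ((i < N)%N -> 0 < B ^+ i * A ^+ N - A ^+ i * B ^+ N).
Proof.
move=> hB hAB hi; rewrite -(subnKC hi) !exprD.
set k := (N - i)%N.
have -> : B ^+ i * (A ^+ i * A ^+ k) - A ^+ i * (B ^+ i * B ^+ k)
   = (A ^+ i * B ^+ i) * (A ^+ k - B ^+ k) by ring.
have hA : 0 < A by apply: lt_trans hAB.
have hp : 0 < A ^+ i * B ^+ i by apply: mulr_gt0; apply: exprn_gt0.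
split.
  apply: mulr_ge0; first exact: ltW.
  rewrite subr_ge0; apply: lerXn2r; rewrite ?nnegrE ?ltW //.
move=> hlt; apply: mulr_gt0 => //.
rewrite subr_gt0 ltrXn2r ?ltW //.
rewrite /k -lt0n subn_gt0; by rewrite subnKC in hlt.
Qed.


Lemma mono_le (R : realType) (f : {poly int}) (A B : R) N :
  0 < B -> B < A -> (forall i, 0 <= f`_i) -> (size f <= N)%N ->
  ev f A * B ^+ N <= ev f B * A ^+ N.
Proof.
move=> hB hAB hf hN; rewrite -subr_ge0 (diff_sum A B hN).
apply: sumr_ge0 => i _; apply: mulr_ge0; first by rewrite ler0z.
by case: (term_pos hB hAB (ltnW (ltn_ord i))).
Qed.

Lemma mono_eq (R : realType) (f : {poly int}) (A B : R) N :
  0 < B -> B < A -> (forall i, 0 <= f`_i) -> (size f <= N)%N ->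
  ev f A * B ^+ N = ev f B * A ^+ N -> forall i, (i < N)%N -> f`_i = 0.
Proof.
move=> hB hAB hf hN he i hi.
have hs := diff_sum A B hN; rewrite he subrr in hs.
have hge : forall j : 'I_N, true -> 0 <= (f`_j)%:~R * (B ^+ j * A ^+ N - A ^+ j * B ^+ N).
  move=> j _; apply: mulr_ge0; first by rewrite ler0z.
  by case: (term_pos hB hAB (ltnW (ltn_ord j))).
have := psumr_eq0P hge (esym hs) (i := Ordinal hi) isT.
have [_ /(_ hi) hpos] := term_pos hB hAB (ltnW hi).
by move=> /eqP; rewrite /= mulf_eq0 (gt_eqF hpos) orbF intr_eq0 => /eqP.
Qed.

Fixpoint reps (t m a : int) (n : nat) {struct n} : seq {poly int} :=
  (a%:P : {poly int}) * 'X^n :: (if n is n'.+1 then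
     [seq 'X^(n.+1) + (a - t)%:P * 'X^n + f | f : {poly int} <- reps t m m n'] else [::]).

Lemma reps_size t m a n : size (reps t m a n) = n.+1.
Proof. elim: n a => [|n IH] a //=; by rewrite size_map IH. Qed.

Lemma size_CX (a : int) (n : nat) : (size (a%:P * 'X^n)%R <= n.+1)%N.
Proof. by apply/leq_sizeP => j hj; rewrite coefCM coefXn gtn_eqF // mulr0. Qed.

Lemma reps_deg t m a n f : f \in reps t m a n -> (size f <= n.+2)%N.
Proof.
elim: n a f => [|n IH] a f /=.
  by rewrite inE => /eqP ->; apply: leq_trans (size_CX a 0) _.
rewrite inE => /orP [/eqP ->|/mapP [g /IH hg ->]].
  by apply: leq_trans (size_CX a n.+1) _.
apply/leq_sizeP => j hj.
rewrite !coefD coefXn coefCM coefXn.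
rewrite (leq_sizeP _ _ hg) ?(leq_trans _ hj) //.
by rewrite !gtn_eqF ?(leq_trans _ hj) // mulr0 !addr0.
Qed.

Lemma reps_uniq t m a n : uniq (reps t m a n).
Proof.
elim: n a => [|n IH] a //=.
rewrite map_inj_uniq ?IH ?andbT; last by move=> f g /addrI.
apply/mapP => -[g hg /(congr1 (fun p : {poly int} => p`_n.+2))].
rewrite !coefD !coefCM !coefXn (leq_sizeP _ _ (reps_deg hg)) //.
rewrite eqxx !gtn_eqF // !mulr0 !addr0.
by move=> /eqP; rewrite eq_sym oner_eq0.
Qed.

Lemma reps_nonneg t m a n f : 0 <= t -> t <= m -> t <= a ->
  f \in reps t m a n -> forall i, 0 <= f`_i.
Proof.
move=> ht htm; elim: n a f => [|n IH] a f hta /=.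
  by rewrite inE => /eqP -> i; rewrite coefCM coefXn mulr_ge0 ?ler0n // (le_trans ht).
rewrite inE => /orP [/eqP ->|/mapP [g hg ->]] i.
  by rewrite coefCM coefXn mulr_ge0 ?ler0n // (le_trans ht).
rewrite !coefD coefCM !coefXn !addr_ge0 ?ler0n ?mulr_ge0 ?ler0n ?subr_ge0 //.
exact: (IH m g htm hg).
Qed.

Lemma pow2S (R : realType) (t m : int) (y : R) n : y ^+ 2 = t%:~R * y - m%:~R ->
  y ^+ n.+2 = t%:~R * y ^+ n.+1 - m%:~R * y ^+ n.
Proof. by move=> hy; rewrite !exprS mulrA -expr2 hy; ring. Qed.

Lemma reps_eval (R : realType) t m a n f (y : R) : y ^+ 2 = t%:~R * y - m%:~R ->
  f \in reps t m a n -> ev f y = a%:~R * y ^+ n.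
Proof.
move=> hy; elim: n a f => [|n IH] a f /=.
  by rewrite inE => /eqP ->; rewrite evCX.
rewrite inE => /orP [/eqP ->|/mapP [g hg ->]]; first by rewrite evCX.
rewrite !evD evX evCX (IH _ _ hg) (pow2S n hy); ring.
Qed.

Lemma deg_bound (R : realType) (A B : R) (a : int) n (f : {poly int}) :
  0 < B -> B < A -> B < 2 -> 2 < A -> a%:~R <= A * B ->
  (forall i, 0 <= f`_i) -> ev f A = a%:~R * A ^+ n ->
  (forall i, (n.+2 <= i)%N -> f`_i = 0) /\ f`_n.+1 <= 1.
Proof.
move=> hB hAB hB2 hA2 ha hf hev.
have hA : 0 < A by apply: lt_trans hAB.
have hAn : 0 < A ^+ n by apply: exprn_gt0.
split.
  move=> i hi; apply/eqP; rewrite eq_le hf andbT leNgt; apply/negP => hpos.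
  have h1 := coef_le i (ltW hA) hf; rewrite hev in h1.
  have hc : 1 <= (f`_i)%:~R :> R by rewrite ler1z -gtz0_ge1.
  have hAi : A ^+ i <= (f`_i)%:~R * A ^+ i by rewrite ler_pMl ?exprn_gt0.
  have hA1 : 1 < A by lra.
  have hAi2 : A ^+ n.+2 <= A ^+ i by rewrite (ler_eXn2l hA1).
  have : A ^+ n * a%:~R < A ^+ n * (A * A).
    rewrite ltr_pM2l //; apply: le_lt_trans ha _; rewrite ltr_pM2l //.
  rewrite -expr2 -exprD addn2 => h3.
  have := le_trans hAi2 (le_trans hAi h1); rewrite mulrC => h4.
  by have := lt_le_trans h3 h4; rewrite ltxx.
rewrite leNgt; apply/negP => hpos.
have h1 := coef_le n.+1 (ltW hA) hf; rewrite hev in h1.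
have hc : 2 <= (f`_n.+1)%:~R :> R.
  by have -> : (2 : R) = (2 : int)%:~R by []; rewrite ler_int; lia.
have h2 : 2 * A ^+ n.+1 <= (f`_n.+1)%:~R * A ^+ n.+1 by rewrite ler_pM2r ?exprn_gt0.
have : A ^+ n * a%:~R < A ^+ n * (2 * A).
  rewrite ltr_pM2l //; apply: le_lt_trans ha _; nra.
have -> : A ^+ n * (2 * A) = 2 * A ^+ n.+1 by rewrite exprS; ring.
rewrite mulrC => h3.
by have := lt_le_trans h3 (le_trans h2 h1); rewrite ltxx.
Qed.

Lemma case0 (R : realType) (A B : R) (a : int) n (f : {poly int}) :
  0 < B -> B < A ->
  (forall i, 0 <= f`_i) -> (forall i, (n.+1 <= i)%N -> f`_i = 0) ->
  ev f A = a%:~R * A ^+ n -> ev f B = a%:~R * B ^+ n ->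
  f = a%:P * 'X^n.
Proof.
move=> hB hAB hf hdeg hevA hevB.
have hA : 0 < A by apply: lt_trans hAB.
have hs : (size f <= n + 1)%N by apply/leq_sizeP => j; rewrite addn1; exact: hdeg.
set L := take_poly n f.
have eL : forall y : R, ev f y = a%:~R * y ^+ n -> ev L y = (a - f`_n)%:~R * y ^+ n.
  move=> y hy; have := ev_take y hs; rewrite hy big_ord1 /= addn0 => E.
  have -> : ev L y = a%:~R * y ^+ n - (f`_n)%:~R * y ^+ n by rewrite E; ring.
  ring.
have hLnn : forall i, 0 <= L`_i by move=> i; rewrite coef_take_poly; case: ifP.
have hL0 : L = 0.
  apply/polyP => i; rewrite coef0.
  have [hi|hi] := ltnP i n.
    apply: (mono_eq hB hAB hLnn (size_take_poly n f)) => //.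
    rewrite (eL _ hevA) (eL _ hevB); ring.
  by rewrite coef_take_poly ltnNge hi.
have hfn : f`_n = a.
  have := eL _ hevA; rewrite hL0 /polyZ map_poly0 horner0 => /esym/eqP.
  rewrite mulf_eq0 expf_eq0 (gt_eqF hA) andbF orbF intr_eq0 subr_eq0.
  by move=> /eqP.
apply/polyP => i; rewrite coefCM coefXn.
have [hi|hi|->] := ltngtP i n.
- have := congr1 (fun p : {poly int} => p`_i) hL0.
  by rewrite /= coef_take_poly hi coef0 => ->; rewrite mulr0.
- by rewrite hdeg // mulr0.
- by rewrite hfn mulr1.
Qed.

Lemma classify (R : realType) (t m : int) (A B : R) :
  0 < B -> B < A -> B < 2 -> 2 < A -> A + B = t%:~R -> A * B = m%:~R -> t <= m ->
  forall (n : nat) (a : int) (f : {poly int}), t <= a -> a <= m -> (forall i, 0 <= f`_i) ->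
  ev f A = a%:~R * A ^+ n -> ev f B = a%:~R * B ^+ n -> f \in reps t m a n.
Proof.
move=> hB hAB hB2 hA2 hs hp htm.
have hA : 0 < A by apply: lt_trans hAB.
have rA : A ^+ 2 = t%:~R * A - m%:~R by rewrite -hs -hp; ring.
have rB : B ^+ 2 = t%:~R * B - m%:~R by rewrite -hs -hp; ring.
elim=> [|n IH] a f hta ham hf hevA hevB.
  have ha : a%:~R <= A * B by rewrite hp ler_int.
  have [hdeg hc] := deg_bound hB hAB hB2 hA2 ha hf hevA.
  have : f`_1 = 0 \/ f`_1 = 1 by have := hf 1%N; lia.
  case=> hc1.
    rewrite /= inE; apply/eqP; apply: (case0 hB hAB hf _ hevA hevB).
    by move=> i; case: i => [|[|i]] // _; apply: hdeg.
  exfalso.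
  have hs2 : (size f <= 2)%N by apply/leq_sizeP => j hj; apply: hdeg.
  have e : forall y : R, ev f y = (f`_0)%:~R + y.
    move=> y; rewrite (ev_sum y hs2) !big_ord_recr big_ord0 /= hc1; ring.
  move: hevA hevB; rewrite !e !expr0 !mulr1 => h1 h2.
  have : A = B by lra.
  by move=> hAB'; rewrite hAB' ltxx in hAB.
have ha : a%:~R <= A * B by rewrite hp ler_int.
have [hdeg hc] := deg_bound hB hAB hB2 hA2 ha hf hevA.
have : f`_n.+2 = 0 \/ f`_n.+2 = 1 by have := hf n.+2; lia.
case=> hc1.
  rewrite /= inE; apply/orP; left; apply/eqP.
  apply: (case0 hB hAB hf _ hevA hevB) => i hi.
  by have [->|hi'] := eqVneq i n.+2; [|apply: hdeg; rewrite ltn_neqAle eq_sym hi' hi].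
have hs3 : (size f <= n + 3)%N.
  by apply/leq_sizeP => j hj; apply: hdeg; rewrite -addn3.
have hd : a - t <= f`_n.+1.
  rewrite leNgt; apply/negP => hlt.
  set L := take_poly n f.
  set k : R := (a - f`_n.+1 - t)%:~R.
  set w : R := (m - f`_n)%:~R.
  have eL : forall y : R, y ^+ 2 = t%:~R * y - m%:~R ->
      ev f y = a%:~R * y ^+ n.+1 -> ev L y = y ^+ n * (k * y + w).
    move=> y hy hy'; have := ev_take y hs3; rewrite hy' !big_ord_recr big_ord0 /=.
    rewrite !addn0 addn1 addn2 hc1 => E.
    have -> : ev L y = a%:~R * y ^+ n.+1 - ((f`_n)%:~R * y ^+ n
       + (f`_n.+1)%:~R * y ^+ n.+1 + (1%:~R) * y ^+ n.+2) by rewrite E; ring.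
    rewrite (pow2S n hy) /k /w exprS; ring.
  have hLnn : forall i, 0 <= L`_i by move=> i; rewrite coef_take_poly; case: ifP.
  have := mono_le hB hAB hLnn (size_take_poly n f).
  rewrite (eL _ rA hevA) (eL _ rB hevB).
  have hP : 0 < A ^+ n * B ^+ n by apply: mulr_gt0; apply: exprn_gt0.
  have -> : A ^+ n * (k * A + w) * B ^+ n = (A ^+ n * B ^+ n) * (k * A + w) by ring.
  have -> : B ^+ n * (k * B + w) * A ^+ n = (A ^+ n * B ^+ n) * (k * B + w) by ring.
  rewrite ler_pM2l // lerD2r.
  have hk : 0 < k by rewrite /k ltr0z; lia.
  by rewrite ler_pM2l // leNgt hAB.
set g := f - 'X^(n.+2) - (a - t)%:P * 'X^(n.+1).
have hg : forall i, 0 <= g`_i.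
  move=> i; rewrite /g !coefB coefCM !coefXn.
  have [->|h1] := eqVneq i n.+2.
    by rewrite gtn_eqF // hc1 mulr0 subr0 mulr1n subrr.
  have [->|h2] := eqVneq i n.+1.
    by rewrite mulr0n mulr1n mulr1 subr0 subr_ge0.
  by rewrite !mulr0n mulr0 !subr0.
have eg : forall y : R, y ^+ 2 = t%:~R * y - m%:~R ->
    ev f y = a%:~R * y ^+ n.+1 -> ev g y = m%:~R * y ^+ n.
  move=> y hy hy'; rewrite /g !evB evX evCX hy' (pow2S n hy) exprS; ring.
have := IH m g htm (lexx m) hg (eg _ rA hevA) (eg _ rB hevB) => hgm.
rewrite /= inE; apply/orP; right; apply/mapP; exists g => //.
rewrite /g; ring.
Qed.

Lemma core (R : realType) (t m : int) (A B : R) :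
  0 < B -> B < A -> B < 2 -> 2 < A -> A + B = t%:~R -> A * B = m%:~R -> t <= m ->
  forall (n : nat) (f : {poly int}), f \in reps t m t n <->
   ((forall i, 0 <= f`_i) /\ ev f A = t%:~R * A ^+ n /\ ev f B = t%:~R * B ^+ n).
Proof.
move=> hB hAB hB2 hA2 hs hp htm n f.
have rA : A ^+ 2 = t%:~R * A - m%:~R by rewrite -hs -hp; ring.
have rB : B ^+ 2 = t%:~R * B - m%:~R by rewrite -hs -hp; ring.
have ht : 0 <= t by rewrite -(ler_int R) -hs; lra.
split.
  move=> hf; split; first exact: (reps_nonneg ht htm (lexx t) hf).
  by split; apply: reps_eval hf.
case=> hf [hA hB'].
exact: (classify hB hAB hB2 hA2 hs hp htm (lexx t) htm hf hA hB').
Qed.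

Lemma core2 (R : realType) (t m : int) (x y : R) :
  0 < x -> 0 < y -> x != y -> x + y = t%:~R -> x * y = m%:~R -> t <= m ->
  (m%:~R : R) < 2 * t%:~R - 4 ->
  forall (n : nat) (f : {poly int}), f \in reps t m t n <->
   ((forall i, 0 <= f`_i) /\ ev f x = t%:~R * x ^+ n /\ ev f y = t%:~R * y ^+ n).
Proof.
move=> hx hy hxy hs hp htm h2 n f.
have hprod : (x - 2) * (y - 2) < 0.
  have -> : (x - 2) * (y - 2) = x * y - 2 * (x + y) + 4 by ring.
  rewrite hp hs; lra.
case: (ltgtP x y) => hlt; last by rewrite hlt eqxx in hxy.
  have hx2 : x < 2 by nra.
  have hy2 : 2 < y by nra.
  rewrite (core hx hlt hx2 hy2) ?(addrC y) ?(mulrC y) //.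
  by split; case=> a [b c].
have hy2 : y < 2 by nra.
have hx2 : 2 < x by nra.
by rewrite (core hy hlt hy2 hx2) ?(addrC y) ?(mulrC y).
Qed.

Lemma ev_quad (R : realType) (p : {poly int}) (y : R) :
  p \is monic -> size p = 3%N -> ev p y = (p`_0)%:~R + (p`_1)%:~R * y + y ^+ 2.
Proof.
move=> hmon hsz.
have h2 : p`_2 = 1 by move/monicP: hmon; rewrite lead_coefE hsz.
have hs : (size p <= 3)%N by rewrite hsz.
rewrite (ev_sum y hs) !big_ord_recr big_ord0 /= h2; ring.
Qed.

Lemma no_rat_root (R : realType) (p : {poly int}) (beta : R) (r0 r1 : int) :
  quad_int_minpoly p beta -> r1 != 0 -> r0%:~R + r1%:~R * beta != 0.
Proof.
case=> hmon hsz hirr hroot hr1; apply/negP => /eqP hb.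
have hr1R : (r1%:~R : R) != 0 by rewrite intr_eq0.
set q0 : rat := - r0%:~R / r1%:~R.
have hq : ratr q0 = beta :> R.
  rewrite /q0 fmorph_div rmorphN /= !ratr_int.
  apply: (mulIf hr1R); rewrite divfK //.
  have -> : beta * r1%:~R = (r0%:~R + r1%:~R * beta) - r0%:~R by ring.
  by rewrite hb sub0r.
set P := polyZ rat p.
have hPR : polyZ R p = map_poly ratr P.
  rewrite /P /polyZ -map_poly_comp; apply: eq_map_poly => z /=.
  by rewrite ratr_int.
have hP : root P q0.
  apply/rootP; apply/eqP; rewrite -(fmorph_eq0 (ratr : {rmorphism rat -> R})).
  rewrite -horner_map -hPR.
  have E : ev p (ratr q0) = ev p beta by congr (_.[_]); exact: hq.
  by rewrite E; apply/eqP/rootP.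
have hd : ('X - q0%:P) %| P by rewrite dvdp_XsubCl.
have := hirr.2 _ _ hd; rewrite size_XsubC => /(_ isT) /eqp_size.
by rewrite size_XsubC /P /polyZ size_map_inj_poly ?hsz //; apply: intr_inj.
Qed.

Lemma conj_root (R : realType) (p : {poly int}) (beta : R) :
  quad_int_minpoly p beta -> forall h : {poly int},
  ev h beta = 0 -> ev h (qconj p beta) = 0.
Proof.
move=> hq h hh; have [hmon hsz hirr hroot] := hq.
have hpb : ev p beta = 0 by apply/rootP.
have hpb' : ev p (qconj p beta) = 0.
  move: hpb; rewrite !ev_quad // /qconj => hpb.
  have -> : (p`_0)%:~R + (p`_1)%:~R * (- (p`_1)%:~R - beta) + (- (p`_1)%:~R - beta) ^+ 2
     = (p`_0)%:~R + (p`_1)%:~R * beta + beta ^+ 2 :> R by ring.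
  exact: hpb.
have hp0 : p != 0 by apply: monic_neq0.
set r := Pdiv.CommonRing.rmodp h p.
have hdec := Pdiv.RingMonic.rdivp_eq hmon h.
have hr : (size r <= 2)%N.
  by have := Pdiv.CommonRing.ltn_rmodpN0 h hp0; rewrite hsz.
have er : forall y : R, ev r y = (r`_0)%:~R + (r`_1)%:~R * y.
  by move=> y; rewrite (ev_sum y hr) !big_ord_recr big_ord0 /=; ring.
have eh : forall y : R, ev h y = ev (Pdiv.CommonRing.rdivp h p) y * ev p y + ev r y.
  by move=> y; rewrite {1}hdec evD evM.
move: hh; rewrite eh hpb mulr0 add0r er => hb.
rewrite eh hpb' mulr0 add0r er.
have [h1|h1] := eqVneq (r`_1) 0.
  by move: hb; rewrite h1 !mul0r !addr0 => ->.
by move: (no_rat_root (r`_0) hq h1); rewrite hb eqxx.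
Qed.

Unset Implicit Arguments.

Theorem theorem2 (R : realType) (p : {poly int}) (beta : R)
  (hq : quad_int_minpoly p beta)
  (htp : totally_positive p beta)
  (h1 : qtr p beta <= qnm p beta)
  (h2 : qnm p beta < 2 * qtr p beta - 4) :
  forall n : nat, p_count_eq beta (qtr p beta * beta ^+ n) n.+1.
Proof.
move=> n; have [hmon hsz hirr hroot] := hq.
set t : int := - p`_1; set m : int := p`_0.
set b' := qconj p beta.
have hpb : ev p beta = 0 by apply/rootP.
rewrite ev_quad // in hpb.
have et : qtr p beta = t%:~R by rewrite /qtr /qconj /t; ring.
have hs : beta + b' = t%:~R by [].
have hp : beta * b' = m%:~R.
  rewrite /b' /qconj /m.
  have -> : beta * (- (p`_1)%:~R - beta) =
     (p`_0)%:~R - ((p`_0)%:~R + (p`_1)%:~R * beta + beta ^+ 2) :> R by ring.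
  by rewrite hpb subr0.
have em : qnm p beta = m%:~R by [].
rewrite et em in h1 h2; rewrite et.
have htm : t <= m by rewrite -(ler_int R).
have hneq : beta != b'.
  apply/eqP => heq.
  have := no_rat_root (- t) hq (isT : (2 : int) != 0).
  have -> : (- t)%:~R + (2 : int)%:~R * beta = beta - b' :> R.
    rewrite rmorphN /= -hs; ring.
  by rewrite heq subrr eqxx.
have [hb hb'] := htp.
have rb : beta ^+ 2 = t%:~R * beta - m%:~R by rewrite -hs -hp; ring.
exists (reps t m t n); split.
- exact: reps_uniq.
- exact: reps_size.
move=> f; split.
  move=> hf; split.
    apply: reps_nonneg hf => //; rewrite -(ler_int R) -hs; lra.
  exact: (reps_eval rb hf).
case=> hf hev.
have hev' : ev f b' = t%:~R * b' ^+ n.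
  have := conj_root hq (h := f - t%:P * 'X^n).
  rewrite !evB !evCX hev subrr => /(_ erefl) /eqP.
  by rewrite subr_eq0 => /eqP.
by apply/(core2 hb hb' hneq hs hp htm h2).
Qed.
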